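(* Let $\mathcal{F}=\{f_i\}_{i=1}^N$ be a frame for $\mathbb{R}^n$ of length $N$ which has the exact PR-redundancy property and satisfies $d(\mathcal{F})<n$. Then $N<n(n+1)/2$.
   Context: A frame for $\mathbb{R}^n$ is a finite spanning sequence; $\mathcal{F}_\Lambda=\{f_i\}_{i\in\Lambda}$ for $\Lambda\subseteq\{1,\dots,N\}$. Let $\mathcal{S}_2$ be the set of real symmetric $n\times n$ matrices of rank at most $2$ and $\Theta_{L(\mathcal{F}_\Lambda)}(A)=(f_i^TAf_i)_{i\in\Lambda}$. $\mathcal{F}$ has the exact PR-redundancy property if $\ker(\Theta_{L(\mathcal{F}_\Lambda)})\cap\mathcal{S}_2\neq\ker(\Theta_{L(\mathcal{F})})\cap\mathcal{S}_2$ for every proper subset $\Lambda$. With $\Lambda^c$ the complement, $d_\Lambda=\max\{\dim\mathrm{span}(\mathcal{F}_\Lambda),\dim\mathrm{span}(\mathcal{F}_{\Lambda^c})\}$ and $d(\mathcal{F})=\min_{\Lambda\subseteq\{1,\dots,N\}}d_\Lambda$. *)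

(* Defs.v *)
From mathcomp Require Import all_boot all_order all_algebra.
From mathcomp Require Import reals.
Set Implicit Arguments. Unset Strict Implicit. Unset Printing Implicit Defensive.
Import Order.TTheory GRing.Theory Num.Theory.
Local Open Scope ring_scope.

Section Frames.
Variables (R : realType) (n N : nat).
Implicit Types (f : 'I_N -> 'rV[R]_n) (L : {set 'I_N}) (A : 'M[R]_n).

Definition is_frame f : Prop := ((1%:M : 'M[R]_n) <= (\big[addsmx/0]_(i < N) <<f i>>%MS))%MS.

Definition span_dim f L : nat := \rank (\big[addsmx/0]_(i in L) <<f i>>%MS).

Definition S2 A : Prop := A^T = A /\ (\rank A <= 2)%N.

(* Theta_{L(F_L)}(A) = (f_i^T A f_i)_{i in L}, coordinates outside L padded by 0
   (so its kernel is exactly the kernel of the map into R^L); f_i is a row vector here,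
   so f_i^T A f_i is the 1x1 matrix f i *m A *m (f i)^T *)
Definition Theta f L A : {ffun 'I_N -> R} :=
  [ffun i => if i \in L then (f i *m A *m (f i)^T) 0 0 else 0].

Definition kerS2 f L : 'M[R]_n -> Prop :=
  fun A => Theta f L A = 0 /\ S2 A.

Definition exact_PR_redundancy f : Prop :=
  forall L : {set 'I_N}, L \proper [set: 'I_N] -> kerS2 f L <> kerS2 f [set: 'I_N].

Definition d_Lam f L : nat := maxn (span_dim f L) (span_dim f (~: L)).

(* d(F) = min_L d_L ; every d_L <= n, so the neutral element n of the
   iterated minn is harmless (the index set of L's is nonempty anyway). *)
Definition d_frame f : nat := \big[minn/n]_(L : {set 'I_N}) d_Lam f L.

End Frames.

(* Main.v *)
Require Import Defs.
From mathcomp Require Import all_boot all_order all_algebra.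
From mathcomp Require Import reals.
From mathcomp Require Import zify.
From Stdlib Require Import Classical FunctionalExtensionality PropExtensionality.
Set Implicit Arguments. Unset Strict Implicit. Unset Printing Implicit Defensive.
Import Order.TTheory GRing.Theory Num.Theory.
Lemma sumtri n : \sum_(a < n) (n - a) = (n * n.+1) %/ 2.
Proof.
elim: n => [|n IH]; first by rewrite big_ord0.
rewrite big_ord_recl /= subn0.
rewrite (eq_bigr (fun a : 'I_n => n - a)); last by move=> i _; rewrite /bump /= add1n subSS.
rewrite IH.
have -> : n.+1 * n.+2 = n * n.+1 + n.+1 * 2 by rewrite mulnC; lia.
by rewrite divnDMl // addnC.
Qed.

Lemma card_T n : #|[set p : 'I_n * 'I_n | (p.1 <= p.2)%N]| = (n * n.+1) %/ 2.
Proof.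
rewrite -sum1dep_card -sumtri.
rewrite -(pair_big_dep xpredT (fun (a b : 'I_n) => a <= b) (fun _ _ => 1)) /=.
apply: eq_bigr => a _.
rewrite (eq_bigl (fun b : 'I_n => xpredT (nat_of_ord b) && (a <= b))) // -(@big_geq_mkord _ _ _ a n xpredT (fun _ => 1)) sum_nat_const_nat; lia.
Qed.

Local Open Scope ring_scope.

Definition qf (R : realType) n (v : 'rV[R]_n) (A : 'M[R]_n) : R := (v *m A *m v^T) 0 0.

Lemma qf_sum (R : realType) n (v : 'rV[R]_n) P (c : 'I_P -> R) (B : 'I_P -> 'M[R]_n) :
  qf v (\sum_(k < P) c k *: B k) = \sum_(k < P) c k * qf v (B k).
Proof.
rewrite /qf mulmx_sumr mulmx_suml summxE; apply: eq_bigr => k _.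
by rewrite -scalemxAr -scalemxAl mxE.
Qed.

Definition Em (R : realType) n (p : 'I_n * 'I_n) : 'M[R]_n :=
  delta_mx p.1 p.2 + delta_mx p.2 p.1.
Definition TT n := [set p : 'I_n * 'I_n | (p.1 <= p.2)%N].
Definition symv (R : realType) n (x : 'rV[R]_#|TT n|) : 'M[R]_n :=
  \sum_(k < #|TT n|) x 0 k *: Em R (enum_val k).
Definition Mf (R : realType) n N (f : 'I_N -> 'rV[R]_n) : 'M[R]_(#|TT n|, N) :=
  \matrix_(k, i) qf (f i) (Em R (enum_val k)).

Lemma Mf_mul (R : realType) n N (f : 'I_N -> 'rV[R]_n) x i :
  (x *m Mf f) 0 i = qf (f i) (symv x).
Proof. by rewrite mxE /symv qf_sum; apply: eq_bigr => k _; rewrite mxE. Qed.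

Lemma symv0 (R : realType) n : symv (0 : 'rV[R]_#|TT n|) = 0.
Proof. by rewrite /symv big1 // => k _; rewrite mxE scale0r. Qed.

Lemma Em_entry (R : realType) n (p : 'I_n * 'I_n) i j :
  Em R p i j = ((i == p.1) && (j == p.2))%:R + ((i == p.2) && (j == p.1))%:R.
Proof. by rewrite !mxE. Qed.

Lemma symv_surj (R : realType) n (A : 'M[R]_n) : A^T = A -> exists x, symv x = A.
Proof.
move=> hA.
pose g (p : 'I_n * 'I_n) := if p.1 == p.2 then A p.1 p.1 / 2 else A p.1 p.2.
exists (\row_k g (enum_val k)).
apply/matrixP => i j; rewrite summxE.
transitivity (\sum_(p in TT n) g p * Em R p i j).
  rewrite (big_enum_val (fun p => g p * Em R p i j)); apply: eq_bigr => k _.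
  by rewrite !mxE.
have hAs : A j i = A i j by rewrite -{1}hA mxE.
case: (leqP i j) => hij.
  rewrite (bigD1 (i, j)) /=; last by rewrite inE.
  rewrite big1 ?addr0; last first.
    move=> [a b] /andP [] /=; rewrite inE /= => hab hne.
    rewrite Em_entry /=.
    have h1 : ((i == a) && (j == b)) = false.
      apply/negbTE; apply: contra hne => /andP [/eqP <- /eqP <-]; by [].
    have h2 : ((i == b) && (j == a)) = false.
      apply/negbTE; apply: contra hne => /andP [/eqP ei /eqP ej].
      subst; have eab : a = b by apply/val_inj/eqP; rewrite eqn_leq hab hij.
      by subst.
    by rewrite h1 h2 addr0 mulr0.
  rewrite Em_entry /= !eqxx /= /g /=.
  case: (eqVneq i j) => [<-|ne]; first by rewrite mulr1n -mulr2n mulr_natr -mulr_natr mulfVK // pnatr_eq0.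
  by rewrite addr0 mulr1.
rewrite (bigD1 (j, i)) /=; last by rewrite inE /= ltnW.
rewrite big1 ?addr0; last first.
  move=> [a b] /andP [] /=; rewrite inE /= => hab hne.
  rewrite Em_entry /=.
  have h1 : ((i == a) && (j == b)) = false.
    apply/negbTE/negP => /andP [/eqP ei /eqP ej]; subst.
    by move: hij; rewrite ltnNge hab.
  have h2 : ((i == b) && (j == a)) = false.
    apply/negbTE; apply: contra hne => /andP [/eqP <- /eqP <-]; by [].
  by rewrite h1 h2 addr0 mulr0.
have ne : (j == i) = false by apply/negbTE; rewrite neq_ltn hij.
by rewrite Em_entry /= /g /= ne eqxx andbF /= add0r eqxx mulr1 hAs.
Qed.
Lemma ortho (R : realType) n N (f : 'I_N -> 'rV[R]_n) (L : {set 'I_N}) :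
  (span_dim f L < n)%N ->
  exists2 u : 'rV[R]_n, u != 0 & forall i, i \in L -> f i *m u^T = 0.
Proof.
rewrite /span_dim => hS.
set S := (\big[addsmx/0]_(i in L) <<f i>>%MS) in hS *.
have hK : (0 < \rank (kermx S^T))%N by rewrite mxrank_ker mxrank_tr subn_gt0.
have [r hr] : exists r, row r (kermx S^T) != 0.
  apply/existsP; apply: contraLR hK => /existsPn H.
  have -> : kermx S^T = 0.
    by apply/row_matrixP => r; rewrite row0; apply/eqP; rewrite -[_ == _]negbK H.
  by rewrite mxrank0.
exists (row r (kermx S^T)) => // i iL.
have : (f i <= S)%MS by apply: (sumsmx_sup i) => //; rewrite genmxE.
case/submxP => w ->.
have h0 : row r (kermx S^T) *m S^T = 0 by rewrite -row_mul mulmx_ker row0.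
have h1 : S *m (row r (kermx S^T))^T = 0 by rewrite -(trmxK (S *m _)) trmx_mul trmxK h0 trmx0.
by rewrite -mulmxA h1 mulmx0.
Qed.

Lemma qf_rank1 (R : realType) n (w a b : 'rV[R]_n) :
  qf w (a^T *m b) = ((w *m a^T) *m (b *m w^T)) 0 0.
Proof. by rewrite /qf !mulmxA. Qed.

Lemma tr0 (R : realType) n (w a : 'rV[R]_n) : w *m a^T = 0 -> a *m w^T = 0.
Proof. by move=> h; rewrite -[a *m _]trmxK trmx_mul trmxK h trmx0. Qed.

Theorem proposition3p8 (R : realType) (n N : nat) (f : 'I_N -> 'rV[R]_n) :
  is_frame f -> exact_PR_redundancy f -> (d_frame f < n)%N ->
  (N < (n * n.+1) %/ 2)%N.
Proof.
move=> _ hPR hd.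
have [L hL] : exists L, (d_Lam f L < n)%N.
  case: (boolP [exists L, (d_Lam f L < n)%N]) => [/existsP //|/existsPn H].
  exfalso; suff : (n <= d_frame f)%N by rewrite leqNgt hd.
  rewrite /d_frame; elim/big_ind: _ => //.
    by move=> x y hx hy; rewrite leq_min hx hy.
  by move=> L' _; rewrite leqNgt H.
move: hL; rewrite /d_Lam gtn_max => /andP [hL1 hL2].
have [u unz hu] := ortho hL1.
have [v vnz hv] := ortho hL2.
pose A0 := u^T *m v + v^T *m u.
have A0sym : A0^T = A0 by rewrite /A0 raddfD /= !trmx_mul !trmxK addrC.
have A0ker : forall i, qf (f i) A0 = 0.
  move=> i.
  have -> : qf (f i) A0 = qf (f i) (u^T *m v) + qf (f i) (v^T *m u).
    by rewrite /qf /A0 mulmxDr mulmxDl mxE.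
  rewrite !qf_rank1.
  case: (boolP (i \in L)) => iL.
    by rewrite (hu i iL) (tr0 (hu i iL)) mul0mx mulmx0 !mxE addr0.
  have iL' : i \in ~: L by rewrite inE.
  by rewrite (hv i iL') (tr0 (hv i iL')) mul0mx mulmx0 !mxE addr0.
have A0e : forall a b, A0 a b = u 0 a * v 0 b + v 0 a * u 0 b.
  by move=> a b; rewrite !mxE !big_ord1 !mxE.
have A0nz : A0 != 0.
  apply/eqP => h0.
  have [a ha] : exists a, u 0 a != 0.
    apply/existsP; apply: contraNT unz => /existsPn H.
    by apply/eqP/rowP => a; rewrite mxE; apply/eqP; rewrite -[_ == _]negbK H.
  have hva : v 0 a = 0.
    have : (u 0 a * v 0 a) *+ 2 = 0.
      by rewrite mulr2n {2}mulrC -A0e h0 mxE.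
    by move/eqP; rewrite mulrn_eq0 /= mulf_eq0 (negbTE ha) /= => /eqP.
  move/eqP: vnz; apply; apply/rowP => b; rewrite mxE.
  have := A0e a b; rewrite h0 mxE hva mul0r addr0 => /esym/eqP.
  by rewrite mulf_eq0 (negbTE ha) /= => /eqP.
have [x0 hx0] := symv_surj A0sym.
have x0nz : x0 != 0 by apply: contraNneq A0nz => h; rewrite -hx0 h symv0.
have hx0M : x0 *m Mf f = 0.
  by apply/rowP => i; rewrite Mf_mul hx0 A0ker mxE.
have hrk : (\rank (Mf f) < #|TT n|)%N.
  have : (x0 <= kermx (Mf f))%MS by rewrite sub_kermx hx0M.
  move/mxrankS; rewrite mxrank_ker => h.
  have : (0 < \rank x0)%N by rewrite lt0n mxrank_eq0.
  move=> h'; rewrite -subn_gt0; exact: leq_trans h' h.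
have hj : forall j : 'I_N, exists x : 'rV[R]_#|TT n|,
    (forall i, i != j -> qf (f i) (symv x) = 0) /\ qf (f j) (symv x) != 0.
  move=> j.
  pose L' := [set: 'I_N] :\ j.
  have prL : L' \proper [set: 'I_N] by apply: properD1; rewrite in_setT.
  have H := hPR L' prL.
  have : ~ (forall A, kerS2 f L' A -> kerS2 f [set: 'I_N] A).
    move=> Hc; apply: H; apply: functional_extensionality => A.
    apply: propositional_extensionality; split; first exact: Hc.
    move=> [hT hS]; split => //; apply/ffunP => i.
    have := congr1 (fun g : {ffun 'I_N -> R} => g i) hT; rewrite /= /Theta !ffunE in_setT => hTi.
    by rewrite hTi; case: ifP.
  move=> Hn; have [A HA] := not_all_ex_not _ _ Hn.
  have [hk hn] := imply_to_and _ _ HA.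
  move: (hk); rewrite /kerS2 /S2 => [[hT' [hAs _]]].
  have hq : forall i, i != j -> qf (f i) A = 0.
    move=> i ne; have := congr1 (fun g : {ffun 'I_N -> R} => g i) hT'.
    by rewrite /= /Theta !ffunE !inE ne.
  have [x hx] := symv_surj hAs.
  exists x; rewrite hx; split => //.
  apply/eqP => hqj; apply: hn; split; last first.
    by case: hk.
  apply/ffunP => i; rewrite /Theta !ffunE in_setT.
  by case: (eqVneq i j) => [->|ne]; [exact: hqj | exact: hq].
have [X hX] := fin_all_exists hj.
pose Xm : 'M[R]_(N, #|TT n|) :=
  \matrix_(j, k) ((qf (f j) (symv (X j)))^-1 * X j 0 k).
have hXM : Xm *m Mf f = 1%:M.
  apply/matrixP => j i.
  transitivity ((qf (f j) (symv (X j)))^-1 * (X j *m Mf f) 0 i).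
    rewrite [in RHS]mxE mulr_sumr mxE; apply: eq_bigr => k _.
    by rewrite !mxE mulrA.
  rewrite Mf_mul mxE.
  case: (eqVneq j i) => [<-|ne].
    by rewrite mulVf //; case: (hX j).
  by case: (hX j) => h _; rewrite (h i) ?mulr0 // eq_sym.
have : (N <= \rank (Mf f))%N.
  by rewrite -{1}(mxrank1 R N) -hXM mxrankM_maxr.
move=> hN; rewrite -card_T.
exact: leq_ltn_trans hN hrk.
Qed.
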